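(* Let $\delta\ge0$ and let $T\in C^1(\mathbb{T}^1)$ be a diffeomorphism with $T'>0$ and rotation number $\rho\in D_\delta$. Suppose $T$ has an invariant probability measure with a continuous positive density $h$, and that for some constant $\sigma\in[0,1+\delta)$ there is $C$ with $|(T^{q_n})'(\xi)-1|\le CE_{n,\sigma}$ for all $n\ge0$, $\xi\in\mathbb{T}^1$. Then there is $C'$ with $|(T^{q_n})'(\xi)-1|\le C'\Delta_n^{\sigma/(1+\delta)}$ for all $n\ge0$, $\xi\in\mathbb{T}^1$, and $h\in C^{\max\{0,\sigma-\delta\}}(\mathbb{T}^1)$.
   Context: An irrational $\rho$ is in $D_\delta$ if there is $C>0$ with $|\rho-p/q|\ge Cq^{-2-\delta}$ for all rationals $p/q$. Write $\rho\in(0,1)$ as a continued fraction $\rho=[k_1,k_2,\dots]$ with convergents $p_n/q_n$, where $p_0=0,q_0=1,p_{-1}=1,q_{-1}=0$, $p_n=k_np_{n-1}+p_{n-2}$, $q_n=k_nq_{n-1}+q_{n-2}$. Set $\Delta_n=|q_n\rho-p_n|$ for $n\ge-1$ (so $\Delta_{-1}=1$), and for $\sigma\ge0$ set $E_{n,\sigma}=\sum_{k=0}^n\frac{\Delta_n}{\Delta_{n-k}}\Delta_{n-k-1}^\sigma$. $C^\alpha$ for $\alpha\in(0,1]$ means $\alpha$-Hölder; $C^0$ means continuous. *)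

(* Defs.v *)
From Stdlib Require Import Reals Lra Lia.
From Coquelicot Require Import Coquelicot.
Open Scope R_scope.

(* Gauss map x |-> frac(1/x); the n-th partial quotient of rho is
   k_n = floor(1 / G^{n-1}(rho)), so rho = [k_1, k_2, ...]. *)
Definition gauss (x : R) : R := / x - IZR (Int_part (/ x)).

Definition cf_k (rho : R) (n : nat) : nat :=
  Z.to_nat (Int_part (/ Nat.iter (Nat.pred n) gauss rho)).

(* cf_pq rho n = (p_n, q_n, p_{n-1}, q_{n-1}), with p_0 = 0, q_0 = 1,
   p_{-1} = 1, q_{-1} = 0, p_n = k_n p_{n-1} + p_{n-2}, etc. *)
Fixpoint cf_pq (rho : R) (n : nat) : nat * nat * nat * nat :=
  match n with
  | O => (0%nat, 1%nat, 1%nat, 0%nat)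
  | S m =>
      let '(p, q, p', q') := cf_pq rho m in
      let k := cf_k rho (S m) in
      ((k * p + p')%nat, (k * q + q')%nat, p, q)
  end.

Definition cf_p (rho : R) (n : nat) : nat := let '(p, _, _, _) := cf_pq rho n in p.
Definition cf_q (rho : R) (n : nat) : nat := let '(_, q, _, _) := cf_pq rho n in q.
Definition cf_p_prev (rho : R) (n : nat) : nat := let '(_, _, p', _) := cf_pq rho n in p'.
Definition cf_q_prev (rho : R) (n : nat) : nat := let '(_, _, _, q') := cf_pq rho n in q'.

Definition cf_Delta (rho : R) (n : nat) : R :=
  Rabs (INR (cf_q rho n) * rho - INR (cf_p rho n)).
(* cf_Delta_prev n = Delta_{n-1}, for n >= 0 (so cf_Delta_prev 0 = Delta_{-1} = 1) *)
Definition cf_Delta_prev (rho : R) (n : nat) : R :=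
  Rabs (INR (cf_q_prev rho n) * rho - INR (cf_p_prev rho n)).

Definition E_ns (rho : R) (n : nat) (sigma : R) : R :=
  sum_f_R0 (fun k => cf_Delta rho n / cf_Delta rho (n - k) * Rpower (cf_Delta_prev rho (n - k)) sigma) n.

Definition irrational (x : R) : Prop :=
  forall (p : Z) (q : nat), (0 < q)%nat -> x <> IZR p / INR q.

Definition D_delta (delta rho : R) : Prop :=
  irrational rho /\
  exists C : R, 0 < C /\
    forall (p : Z) (q : nat), (0 < q)%nat ->
      C * Rpower (INR q) (- 2 - delta) <= Rabs (rho - IZR p / INR q).

(* C^alpha on the circle, for a 1-periodic f : R -> R:
   alpha = 0 : continuous; alpha in (0,1] : alpha-Hoelder. *)
Definition C_alpha (alpha : R) (f : R -> R) : Prop :=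
  (forall x, continuous f x) /\
  (0 < alpha -> exists C : R, forall x y,
      Rabs (f x - f y) <= C * Rpower (Rabs (x - y)) alpha).

(* F : R -> R is the lift of a C^1 circle diffeomorphism T with T' > 0 *)
Definition C1_circle_diffeo_lift (F : R -> R) : Prop :=
  (forall x, F (x + 1) = F x + 1) /\
  (forall x, ex_derive F x) /\
  (forall x, continuous (Derive F) x) /\
  (forall x, 0 < Derive F x).

(* rotation number of the lift F (here normalized so that it lies in (0,1)) *)
Definition rotation_number (F : R -> R) (rho : R) : Prop :=
  is_lim_seq (fun n => Nat.iter n F 0 / INR n) rho.

Definition invariant_density (F h : R -> R) : Prop :=
  (forall x, h (x + 1) = h x) /\
  (forall x, continuous h x) /\
  (forall x, 0 < h x) /\
  RInt h 0 1 = 1 /\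
  (forall a b, RInt h (F a) (F b) = RInt h a b).

(* Main.v *)
Require Import Defs.
From Stdlib Require Import Reals Lra Lia ZArith.
From Coquelicot Require Import Coquelicot.
Open Scope R_scope.

Lemma Rp_pos x y : 0 < Rpower x y.
Proof. apply exp_pos. Qed.

Lemma Rp_one y : Rpower 1 y = 1.
Proof. unfold Rpower. rewrite ln_1, Rmult_0_r. apply exp_0. Qed.

Lemma Rp_inv x y : 0 < x -> Rpower (/ x) y = / Rpower x y.
Proof. intro H. unfold Rpower. rewrite ln_Rinv by auto. rewrite <- exp_Ropp. f_equal; ring. Qed.

Lemma exp_le_mono a b : a <= b -> exp a <= exp b.
Proof. intros [H|H]; [left; apply exp_increasing; auto | subst; lra]. Qed.

Lemma Rp_base_le a b c : 0 < a <= b -> 0 <= c -> Rpower a c <= Rpower b c.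
Proof. intros; apply Rle_Rpower_l; auto. Qed.

Lemma Rp_base_le_neg a b c : 0 < a <= b -> c <= 0 -> Rpower b c <= Rpower a c.
Proof.
  intros H Hc. unfold Rpower. apply exp_le_mono.
  pose proof (ln_le a b (proj1 H) (proj2 H)). nra.
Qed.

Lemma Rp_exp_le x a b : 0 < x <= 1 -> a <= b -> Rpower x b <= Rpower x a.
Proof.
  intros H Hab. unfold Rpower. apply exp_le_mono.
  assert (ln x <= 0). { rewrite <- ln_1. apply ln_le; lra. } nra.
Qed.

Lemma Rp_mul x y z : 0 < x -> Rpower x y * Rpower x z = Rpower x (y + z).
Proof. intros. rewrite Rpower_plus. ring. Qed.

Lemma Rp_pow x y z : Rpower (Rpower x y) z = Rpower x (y * z).
Proof. apply Rpower_mult. Qed.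

Lemma Rp_1 x : 0 < x -> Rpower x 1 = x.
Proof. apply Rpower_1. Qed.

Lemma Rp_multbase x y z : 0 < x -> 0 < y -> Rpower (x * y) z = Rpower x z * Rpower y z.
Proof. intros. unfold Rpower. rewrite ln_mult by auto. rewrite <- exp_plus. f_equal; ring. Qed.

Section CF.
Variable rho : R.
Hypothesis Hrho : 0 < rho < 1.
Hypothesis Hirr : irrational rho.

Definition xx (j : nat) : R := Nat.iter j gauss rho.
Fixpoint Pr (n : nat) : R := match n with O => 1 | S m => Pr m * xx m end.

Lemma xx_S j : xx (S j) = / xx j - IZR (Int_part (/ xx j)).
Proof. reflexivity. Qed.

Lemma cfq_S m : cf_q rho (S m) = (cf_k rho (S m) * cf_q rho m + cf_q_prev rho m)%nat.
Proof. unfold cf_q, cf_q_prev; simpl. destruct (cf_pq rho m) as [[[p q] p'] q']. reflexivity. Qed.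
Lemma cfp_S m : cf_p rho (S m) = (cf_k rho (S m) * cf_p rho m + cf_p_prev rho m)%nat.
Proof. unfold cf_p, cf_p_prev; simpl. destruct (cf_pq rho m) as [[[p q] p'] q']. reflexivity. Qed.
Lemma cfqp_S m : cf_q_prev rho (S m) = cf_q rho m.
Proof. unfold cf_q, cf_q_prev; simpl. destruct (cf_pq rho m) as [[[p q] p'] q']. reflexivity. Qed.
Lemma cfpp_S m : cf_p_prev rho (S m) = cf_p rho m.
Proof. unfold cf_p, cf_p_prev; simpl. destruct (cf_pq rho m) as [[[p q] p'] q']. reflexivity. Qed.

Definition ee n := INR (cf_q rho n) * rho - INR (cf_p rho n).
Definition eep n := INR (cf_q_prev rho n) * rho - INR (cf_p_prev rho n).

Lemma Int_part_nonneg r : 0 < r -> (0 <= Int_part r)%Z.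
Proof.
  intro H. destruct (base_Int_part r) as [H1 H2].
  assert (-1 < IZR (Int_part r)) by lra.
  apply lt_IZR in H0. lia.
Qed.

Lemma Int_part_ge1 r : 1 < r -> (1 <= Int_part r)%Z.
Proof.
  intro H. destruct (base_Int_part r) as [H1 H2].
  assert (0 < IZR (Int_part r)) by lra.
  apply lt_IZR in H0. lia.
Qed.

Lemma INR_k j : 0 < xx j -> INR (cf_k rho (S j)) = IZR (Int_part (/ xx j)).
Proof.
  intro H. unfold cf_k. simpl Nat.pred. fold (xx j).
  rewrite INR_IZR_INZ, Z2Nat.id; auto. apply Int_part_nonneg. apply Rinv_0_lt_compat; auto.
Qed.

Lemma xx_range j : 0 < xx j -> 0 <= xx (S j) < 1.
Proof.
  intro H. rewrite xx_S. destruct (base_Int_part (/ xx j)). lra.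
Qed.

Lemma xx_rel j : 0 < xx j -> xx j * xx (S j) = 1 - IZR (Int_part (/ xx j)) * xx j.
Proof.
  intro H. rewrite xx_S. field. lra.
Qed.

Lemma ee_formula n : (forall j, (j < n)%nat -> 0 < xx j) ->
  ee n = (-1)^n * Pr (S n) /\ eep n = - (-1)^n * Pr n.
Proof.
  induction n as [|n IH]; intro Hj.
  - unfold ee, eep; simpl. unfold cf_q, cf_p, cf_q_prev, cf_p_prev; simpl. unfold xx; simpl. split; ring.
  - destruct IH as [IH1 IH2]. { intros j Hj'. apply Hj. lia. }
    assert (Hn : 0 < xx n) by (apply Hj; lia).
    assert (E1 : ee (S n) = INR (cf_k rho (S n)) * ee n + eep n).
    { unfold ee, eep. rewrite cfq_S, cfp_S, !plus_INR, !mult_INR. ring. }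
    assert (E2 : eep (S n) = ee n).
    { unfold ee, eep. rewrite cfqp_S, cfpp_S. ring. }
    rewrite E1, E2, IH1, IH2, INR_k by auto. split.
    + simpl Pr. pose proof (xx_rel n Hn). simpl pow. idtac.
      change (gauss (xx n)) with (xx (S n)).
      replace ((-1) * (-1)^n * (Pr n * xx n * xx (S n))) with ((-1) * (-1)^n * Pr n * (xx n * xx (S n))) by ring.
      rewrite H. ring.
    + simpl. ring.
Qed.

Lemma k_ge1 j : 0 < xx j < 1 -> (1 <= cf_k rho (S j))%nat.
Proof.
  intro H. unfold cf_k. simpl Nat.pred. fold (xx j).
  assert (1 <= Int_part (/ xx j))%Z.
  { apply Int_part_ge1. rewrite <- Rinv_1. apply Rinv_lt_contravar; lra. }
  lia.
Qed.

Lemma q_ge1 n : (forall j, (j < n)%nat -> 0 < xx j < 1) -> (1 <= cf_q rho n)%nat.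
Proof.
  induction n as [|n IH]; intro Hj.
  - unfold cf_q; simpl; lia.
  - rewrite cfq_S. pose proof (k_ge1 n (Hj n (Nat.lt_succ_diag_r n))).
    assert (1 <= cf_q rho n)%nat by (apply IH; intros; apply Hj; lia). nia.
Qed.

Lemma xx_pos_all n : 0 < xx n < 1.
Proof.
  induction n as [n IH] using lt_wf_ind.
  destruct n as [|n].
  - unfold xx; simpl; lra.
  - assert (Hn : 0 < xx n < 1) by (apply IH; lia).
    destruct (xx_range n (proj1 Hn)) as [H0 H1]. split; auto.
    destruct H0 as [H0|H0]; auto. exfalso.
    destruct (ee_formula (S n)) as [E _]. { intros j Hj. apply IH; lia. }
    change (Pr (S (S n))) with (Pr (S n) * xx (S n)) in E. rewrite <- H0 in E. rewrite Rmult_0_r, Rmult_0_r in E.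
    pose proof (q_ge1 (S n)) as Hq. specialize (Hq (fun j Hj => IH j Hj)).
    apply (Hirr (Z.of_nat (cf_p rho (S n))) (cf_q rho (S n))). lia.
    rewrite <- INR_IZR_INZ. unfold ee in E.
    assert (0 < INR (cf_q rho (S n))) by (apply lt_0_INR; lia).
    assert (H' : INR (cf_q rho (S n)) * rho = INR (cf_p rho (S n))) by lra.
    rewrite <- H'. field. lra.
Qed.


Lemma Pr_pos n : 0 < Pr n.
Proof. induction n; simpl; [lra|]. pose proof (xx_pos_all n). nra. Qed.

Lemma Delta_Pr n : cf_Delta rho n = Pr (S n).
Proof.
  destruct (ee_formula n) as [E _]. { intros; apply xx_pos_all. }
  unfold cf_Delta. fold (ee n). rewrite E, Rabs_mult, pow_1_abs, Rmult_1_l.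
  apply Rabs_right. left; apply Pr_pos.
Qed.

Lemma Deltap_Pr n : cf_Delta_prev rho n = Pr n.
Proof.
  destruct (ee_formula n) as [_ E]. { intros; apply xx_pos_all. }
  unfold cf_Delta_prev. fold (eep n). rewrite E, Rabs_mult, Rabs_Ropp, pow_1_abs, Rmult_1_l.
  apply Rabs_right. left; apply Pr_pos.
Qed.

Lemma Deltap_S n : cf_Delta_prev rho (S n) = cf_Delta rho n.
Proof. rewrite Deltap_Pr, Delta_Pr. reflexivity. Qed.

Lemma Delta_pos n : 0 < cf_Delta rho n.
Proof. rewrite Delta_Pr. apply Pr_pos. Qed.

Lemma Delta_dec n : cf_Delta rho (S n) < cf_Delta rho n.
Proof.
  rewrite !Delta_Pr. change (Pr (S (S n))) with (Pr (S n) * xx (S n)).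
  pose proof (Pr_pos (S n)). pose proof (xx_pos_all (S n)). nra.
Qed.

Lemma Delta_0 : cf_Delta rho 0 = rho.
Proof. rewrite Delta_Pr. simpl. unfold xx; simpl. ring. Qed.

Lemma xx_prod_half j : xx j * xx (S j) <= / 2.
Proof.
  pose proof (xx_pos_all j) as H. pose proof (xx_pos_all (S j)) as H'.
  destruct (Rle_dec (xx j) (/2)) as [Hl|Hl].
  - nra.
  - rewrite xx_rel by lra.
    assert (Hk : (1 <= Int_part (/ xx j))%Z).
    { apply Int_part_ge1. rewrite <- Rinv_1. apply Rinv_lt_contravar; lra. }
    assert (Hk2 : (Int_part (/ xx j) <= 1)%Z).
    { destruct (base_Int_part (/ xx j)) as [B _].
      assert (/ xx j < 2). { rewrite <- (Rinv_inv 2). apply Rinv_lt_contravar; lra. }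
      assert (IZR (Int_part (/ xx j)) < 2) by lra. apply lt_IZR in H1. lia. }
    assert (Int_part (/ xx j) = 1%Z) by lia. rewrite H0. lra.
Qed.

Lemma Delta_half n : cf_Delta rho (S (S n)) <= cf_Delta rho n / 2.
Proof.
  rewrite !Delta_Pr. change (Pr (S (S (S n)))) with (Pr (S n) * xx (S n) * xx (S (S n))).
  pose proof (Pr_pos (S n)). pose proof (xx_prod_half (S n)). nra.
Qed.

Lemma V_ident n : INR (cf_q rho n) * Pr n + INR (cf_q_prev rho n) * Pr (S n) = 1.
Proof.
  induction n as [|n IH].
  - unfold cf_q, cf_q_prev; simpl. ring.
  - rewrite cfq_S, cfqp_S, plus_INR, mult_INR, INR_k by apply xx_pos_all.
    pose proof (xx_rel n (proj1 (xx_pos_all n))).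
    rewrite <- IH.
    change (Pr (S (S n))) with (Pr (S n) * xx (S n)).
    change (Pr (S n)) with (Pr n * xx n).
    replace (Pr n * xx n * xx (S n)) with (Pr n * (xx n * xx (S n))) by ring.
    rewrite H. ring.
Qed.

Lemma q_Delta n : INR (cf_q rho (S n)) * cf_Delta rho n <= 1.
Proof.
  pose proof (V_ident (S n)). rewrite Delta_Pr. rewrite cfqp_S in H.
  pose proof (pos_INR (cf_q rho n)). pose proof (Pr_pos (S (S n))). nra.
Qed.

Lemma q_pos n : 0 < INR (cf_q rho n).
Proof. apply lt_0_INR. apply q_ge1. intros; apply xx_pos_all. Qed.


Lemma Dio delta : 0 <= delta -> D_delta delta rho ->
  exists c, 0 < c /\ forall n, c * Rpower (cf_Delta_prev rho n) (1 + delta) <= cf_Delta rho n.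
Proof.
  intros Hd [_ [C [HC HD]]]. exists (Rmin C rho). split. { apply Rmin_pos; lra. }
  intro n. destruct n as [|m].
  - rewrite Deltap_Pr. simpl Pr. rewrite Rp_one, Delta_0, Rmult_1_r. apply Rmin_r.
  - rewrite Deltap_S.
    pose proof (q_pos (S m)) as Hq. pose proof (q_Delta m) as HqD.
    pose proof (Delta_pos m) as Hm.
    specialize (HD (Z.of_nat (cf_p rho (S m))) (cf_q rho (S m))).
    rewrite <- INR_IZR_INZ in HD.
    assert (Hq1 : (0 < cf_q rho (S m))%nat). { apply INR_lt. simpl. lra. }
    specialize (HD Hq1).
    set (q := INR (cf_q rho (S m))) in *.
    set (p := INR (cf_p rho (S m))) in *.
    assert (E : cf_Delta rho (S m) = q * Rabs (rho - p / q)).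
    { unfold cf_Delta. fold q p. rewrite <- (Rabs_right q) at 2 by lra.
      rewrite <- Rabs_mult. f_equal. field. lra. }
    assert (E2 : q * Rpower q (-2 - delta) = / Rpower q (1 + delta)).
    { rewrite <- (Rp_1 q) at 1 by auto. rewrite Rp_mul by auto. rewrite <- Rpower_Ropp. f_equal. ring. }
    assert (E3 : Rpower (cf_Delta rho m) (1 + delta) <= / Rpower q (1 + delta)).
    { rewrite <- (Rinv_inv (cf_Delta rho m)). rewrite Rp_inv by (apply Rinv_0_lt_compat; auto).
      apply Rinv_le_contravar. apply Rp_pos. apply Rp_base_le; [|lra]. split; auto.
      apply (Rmult_le_reg_r (cf_Delta rho m)); auto. rewrite Rinv_l by lra. lra. }
    rewrite E.
    apply Rle_trans with (C * Rpower (cf_Delta rho m) (1 + delta)).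
    + apply Rmult_le_compat_r. left; apply Rp_pos. apply Rmin_l.
    + apply Rle_trans with (C * / Rpower q (1 + delta)).
      * apply Rmult_le_compat_l; lra.
      * rewrite <- E2. replace (C * (q * Rpower q (-2 - delta))) with (q * (C * Rpower q (-2 - delta))) by ring.
        apply Rmult_le_compat_l; lra.
Qed.

End CF.

Lemma sum_rev (f : nat -> R) n : sum_f_R0 (fun k => f (n - k)%nat) n = sum_f_R0 f n.
Proof.
  induction n as [|n IH].
  - simpl. reflexivity.
  - rewrite decomp_sum by lia. simpl pred. rewrite Nat.sub_0_r.
    rewrite (sum_eq (fun i => f (S n - S i)%nat) (fun k => f (n - k)%nat)).
    + rewrite IH. simpl. ring.
    + intros i Hi. f_equal.
Qed.

Lemma geom_fwd (b : nat -> R) r : 0 <= r < 1 -> (forall j, 0 <= b j) ->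
  (forall j, b j <= b (S j)) -> (forall j, b j <= r * b (S (S j))) ->
  forall n, sum_f_R0 b n <= 2 / (1 - r) * b n.
Proof.
  intros Hr Hp H1 H2.
  assert (HK : 2 <= 2 / (1 - r)).
  { apply (Rmult_le_reg_r (1 - r)); [lra|]. unfold Rdiv. rewrite Rmult_assoc, Rinv_l by lra. nra. }
  assert (forall n, sum_f_R0 b n <= 2 / (1 - r) * b n /\ sum_f_R0 b (S n) <= 2 / (1 - r) * b (S n)).
  { induction n as [|n [IH1 IH2]].
    - simpl. pose proof (Hp 0%nat). pose proof (Hp 1%nat). pose proof (H1 0%nat). split; nra.
    - split; auto. change (sum_f_R0 b (S (S n))) with (sum_f_R0 b n + b (S n) + b (S (S n))).
      pose proof (H1 (S n)). pose proof (H2 n). pose proof (Hp (S (S n))).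
      assert (E : 2 / (1 - r) * r + 2 = 2 / (1 - r)) by (field; lra).
      assert (2 / (1 - r) * b n <= 2 / (1 - r) * (r * b (S (S n)))) by (apply Rmult_le_compat_l; lra).
      nra. }
  intro n; apply H.
Qed.

Lemma geom_tail (a : nat -> R) r : 0 <= r < 1 -> (forall j, 0 <= a j) ->
  (forall j, a (S j) <= a j) -> (forall j, a (S (S j)) <= r * a j) ->
  forall M j, sum_f_R0 (fun i => a (j + i)%nat) M <= 2 / (1 - r) * a j.
Proof.
  intros Hr Hp H1 H2.
  assert (HK : 2 <= 2 / (1 - r)).
  { apply (Rmult_le_reg_r (1 - r)); [lra|]. unfold Rdiv. rewrite Rmult_assoc, Rinv_l by lra. nra. }
  assert (forall M j, sum_f_R0 (fun i => a (j + i)%nat) M <= 2 / (1 - r) * a j /\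
                      sum_f_R0 (fun i => a (j + i)%nat) (S M) <= 2 / (1 - r) * a j).
  { induction M as [|M IH]; intro j.
    - simpl. rewrite Nat.add_0_r, Nat.add_1_r. pose proof (Hp j). pose proof (H1 j). split; nra.
    - split; [apply IH|].
      rewrite decomp_sum by lia. simpl pred. rewrite decomp_sum by lia. simpl pred.
      rewrite (sum_eq (fun i => a (j + S (S i))%nat) (fun i => a (S (S j) + i)%nat)).
      2:{ intros; f_equal; lia. }
      destruct (IH (S (S j))) as [IHa _].
      rewrite Nat.add_0_r. replace (j + 1)%nat with (S j) by lia.
      pose proof (H1 j). pose proof (H2 j). pose proof (Hp (S (S j))).
      assert (E : 2 / (1 - r) * r + 2 = 2 / (1 - r)) by (field; lra).
      assert (2 / (1 - r) * a (S (S j)) <= 2 / (1 - r) * (r * a j)) by (apply Rmult_le_compat_l; lra).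
      assert (E' : 2 / (1 - r) * (r * a j) = 2 / (1 - r) * a j - 2 * a j).
      { rewrite <- E at 2. ring. }
      lra. }
  intros M j; apply H.
Qed.

Lemma Rp_two_lt1 t : t < 0 -> 0 <= Rpower 2 t < 1.
Proof.
  intro Ht. split. left; apply Rp_pos. unfold Rpower. rewrite <- exp_0. apply exp_increasing.
  assert (0 < ln 2). { rewrite <- ln_1. apply ln_increasing; lra. } nra.
Qed.

Lemma Rp_dec_half rho t : 0 < rho < 1 -> irrational rho -> t <= 0 -> forall j,
  Rpower (cf_Delta rho j) t <= Rpower 2 t * Rpower (cf_Delta rho (S (S j))) t.
Proof.
  intros Hr Hi Ht j. rewrite <- Rp_multbase by (try lra; apply Delta_pos; auto).
  apply Rp_base_le_neg; auto. split. apply Rmult_lt_0_compat; [lra|apply Delta_pos; auto].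
  pose proof (Delta_half rho Hr Hi j). lra.
Qed.

Lemma part1 delta sigma rho : 0 < rho < 1 -> irrational rho -> 0 <= delta -> D_delta delta rho ->
  0 <= sigma < 1 + delta ->
  exists K, 0 <= K /\ forall n, E_ns rho n sigma <= K * Rpower (cf_Delta rho n) (sigma / (1 + delta)).
Proof.
  intros Hr Hi Hd HD Hs.
  destruct (Dio rho Hr Hi delta Hd HD) as [c [Hc Hdio]].
  set (s := sigma / (1 + delta)).
  assert (Hs0 : 0 <= s < 1).
  { unfold s. split. apply Rmult_le_pos; [lra|left; apply Rinv_0_lt_compat; lra].
    apply (Rmult_lt_reg_r (1 + delta)); [lra|]. unfold Rdiv. rewrite Rmult_assoc, Rinv_l by lra. lra. }
  set (t := s - 1).
  set (b := fun j => Rpower (cf_Delta rho j) t).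
  set (r := Rpower 2 t).
  assert (Hr2 : 0 <= r < 1) by (apply Rp_two_lt1; unfold t; lra).
  assert (Hgeo := geom_fwd b r Hr2).
  assert (Hb : forall j, 0 <= b j) by (intro; left; apply Rp_pos).
  assert (Hb1 : forall j, b j <= b (S j)).
  { intro j. unfold b. apply Rp_base_le_neg. split. apply Delta_pos; auto.
    left; apply Delta_dec; auto. unfold t; lra. }
  assert (Hb2 : forall j, b j <= r * b (S (S j))).
  { intro j. unfold b, r. apply Rp_dec_half; auto. unfold t; lra. }
  specialize (Hgeo Hb Hb1 Hb2).
  set (cc := Rpower (/ c) s).
  exists (cc * (2 / (1 - r))). split.
  { apply Rmult_le_pos. left; apply Rp_pos. unfold Rdiv. apply Rmult_le_pos; [lra|left; apply Rinv_0_lt_compat; lra]. }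
  intro n. unfold E_ns.
  assert (Hterm : forall k, (k <= n)%nat ->
    cf_Delta rho n / cf_Delta rho (n - k) * Rpower (cf_Delta_prev rho (n - k)) sigma <=
    (fun j => b j * (cf_Delta rho n * cc)) (n - k)%nat).
  { intros k Hk. set (j := (n - k)%nat). simpl.
    pose proof (Delta_pos rho Hr Hi j) as Hj. pose proof (Delta_pos rho Hr Hi n) as Hn.
    assert (Hpp : 0 < cf_Delta_prev rho j) by (rewrite Deltap_Pr; auto; apply Pr_pos; auto).
    assert (E1 : Rpower (cf_Delta_prev rho j) sigma = Rpower (Rpower (cf_Delta_prev rho j) (1 + delta)) s).
    { rewrite Rp_pow. f_equal. unfold s. field. lra. }
    assert (E2 : Rpower (Rpower (cf_Delta_prev rho j) (1 + delta)) s <= Rpower (cf_Delta rho j * / c) s).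
    { apply Rp_base_le; [|lra]. split. apply Rp_pos.
      specialize (Hdio j). apply (Rmult_le_reg_l c); auto. replace (c * (cf_Delta rho j * / c)) with (cf_Delta rho j) by (field; lra). lra. }
    rewrite Rp_multbase in E2 by (auto; apply Rinv_0_lt_compat; auto). fold cc in E2.
    assert (E3 : Rpower (cf_Delta rho j) s = cf_Delta rho j * b j).
    { unfold b. rewrite <- (Rp_1 (cf_Delta rho j)) at 2 by auto. rewrite Rp_mul by auto. f_equal. unfold t; ring. }
    rewrite E1. apply Rle_trans with (cf_Delta rho n / cf_Delta rho j * (Rpower (cf_Delta rho j) s * cc)).
    - apply Rmult_le_compat_l; auto. unfold Rdiv. apply Rmult_le_pos; [lra|left; apply Rinv_0_lt_compat; auto].
    - rewrite E3. right. field. lra. }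
  eapply Rle_trans. apply sum_Rle. exact Hterm.
  cbv beta. rewrite (sum_rev (fun j => b j * (cf_Delta rho n * cc))).
  rewrite <- scal_sum.
  pose proof (Hgeo n). pose proof (Delta_pos rho Hr Hi n).
  assert (0 <= cc) by (left; apply Rp_pos).
  assert (E4 : Rpower (cf_Delta rho n) s = cf_Delta rho n * b n).
  { unfold b. rewrite <- (Rp_1 (cf_Delta rho n)) at 2 by auto. rewrite Rp_mul by auto. f_equal. unfold t; ring. }
  fold s. rewrite E4.
  apply Rle_trans with ((cf_Delta rho n * cc) * (2 / (1 - r) * b n)).
  - apply Rmult_le_compat_l; auto. apply Rmult_le_pos; lra.
  - right; ring.
Qed.

Lemma shift_Z (f : R -> R) c : (forall x, f (x + 1) = f x + c) ->
  forall z x, f (x + IZR z) = f x + IZR z * c.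
Proof.
  intros Hf.
  assert (Hn : forall n x, f (x + INR n) = f x + INR n * c).
  { induction n as [|n IH]; intro x.
    - simpl. rewrite Rplus_0_r. ring.
    - rewrite S_INR. replace (x + (INR n + 1)) with ((x + INR n) + 1) by ring.
      rewrite Hf, IH. ring. }
  intros z x. destruct (Z_le_gt_dec 0 z) as [Hz|Hz].
  - rewrite <- (Z2Nat.id z Hz), <- INR_IZR_INZ. apply Hn.
  - assert (E : IZR z = - INR (Z.to_nat (- z))).
    { rewrite INR_IZR_INZ, Z2Nat.id by lia. rewrite opp_IZR. ring. }
    rewrite E. specialize (Hn (Z.to_nat (- z)) (x - INR (Z.to_nat (- z)))).
    replace (x - INR (Z.to_nat (- z)) + INR (Z.to_nat (- z))) with x in Hn by ring.
    replace (x + - INR (Z.to_nat (- z))) with (x - INR (Z.to_nat (- z))) by ring. lra.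
Qed.

Lemma frac_decomp x : exists z y, 0 <= y < 1 /\ x = y + IZR z.
Proof.
  exists (Int_part x), (x - IZR (Int_part x)). destruct (base_Int_part x). split; [lra|ring].
Qed.

Section Analysis.
Variables (F h : R -> R).
Hypothesis HF : C1_circle_diffeo_lift F.
Hypothesis Hh : invariant_density F h.

Lemma h_cont x : continuous h x.
Proof. destruct Hh as [_ [H _]]. apply H. Qed.

Lemma h_exRInt a b : ex_RInt h a b.
Proof. apply (@ex_RInt_continuous R_CompleteNormedModule). intros; apply h_cont. Qed.

Lemma chas a b c : RInt h a b + RInt h b c = RInt h a c.
Proof. apply (RInt_Chasles h a b c); apply h_exRInt. Qed.

Lemma h_per z x : h (x + IZR z) = h x.
Proof.
  rewrite (shift_Z h 0). ring. intro y. destruct Hh as [H _]. rewrite H. ring.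
Qed.

Lemma h_bounds : exists mh Mh, 0 < mh /\ forall x, mh <= h x <= Mh.
Proof.
  assert (Hc : forall c, 0 <= c <= 1 -> continuity_pt h c).
  { intros c _. apply continuity_pt_filterlim. apply h_cont. }
  destruct (continuity_ab_maj h 0 1 ltac:(lra) Hc) as [Mx [HM _]].
  destruct (continuity_ab_min h 0 1 ltac:(lra) Hc) as [mx [Hm _]].
  exists (h mx), (h Mx). split. destruct Hh as [_ [_ [Hp _]]]. apply Hp.
  intro x. destruct (frac_decomp x) as [z [y [Hy E]]]. rewrite E, h_per.
  split; [apply Hm|apply HM]; lra.
Qed.

Definition HH (x : R) : R := RInt h 0 x.

Lemma HH_diff a b : HH b - HH a = RInt h a b.
Proof. unfold HH. rewrite <- (chas 0 a b). ring. Qed.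

Lemma HH_0 : HH 0 = 0.
Proof. unfold HH. apply (@RInt_point R_CompleteNormedModule). Qed.

Lemma HH_1 x : HH (x + 1) = HH x + 1.
Proof.
  destruct Hh as [Hp [_ [_ [H1 _]]]].
  assert (E : RInt h 1 (x + 1) = RInt h 0 x).
  { pose proof (RInt_comp_lin h 1 1 0 x) as L.
    replace (1 * 0 + 1) with 1 in L by ring. replace (1 * x + 1) with (x + 1) in L by ring.
    rewrite <- L by apply h_exRInt. apply RInt_ext. intros y _. unfold scal; simpl; unfold mult; simpl.
    replace (1 * y + 1) with (y + 1) by ring. rewrite Hp. ring. }
  pose proof (HH_diff x (x + 1)). rewrite <- (chas x 1 (x + 1)) in H.
  rewrite E in H. pose proof (chas 0 x 1). rewrite H1 in H0. unfold HH in *. lra.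
Qed.

Lemma HH_Z z x : HH (x + IZR z) = HH x + IZR z.
Proof. rewrite (shift_Z HH 1 HH_1). ring. Qed.

Lemma RInt_bounds mh Mh a b : (forall x, mh <= h x <= Mh) -> a <= b ->
  mh * (b - a) <= RInt h a b <= Mh * (b - a).
Proof.
  intros Hb Hab. split.
  - replace (mh * (b - a)) with (RInt (fun _ => mh) a b).
    apply RInt_le; auto. apply ex_RInt_const. apply h_exRInt. intros; apply Hb.
    rewrite RInt_const. unfold scal; simpl. unfold mult; simpl. ring.
  - replace (Mh * (b - a)) with (RInt (fun _ => Mh) a b).
    apply RInt_le; auto. apply h_exRInt. apply ex_RInt_const. intros; apply Hb.
    rewrite RInt_const. unfold scal; simpl. unfold mult; simpl. ring.
Qed.

Lemma HH_deriv x : is_derive HH x (h x).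
Proof.
  apply (is_derive_RInt h HH 0 x). 2: apply h_cont.
  apply filter_forall. intro y. unfold HH. apply (@RInt_correct R_CompleteNormedModule). apply h_exRInt.
Qed.

Lemma HH_cont x : continuous HH x.
Proof. apply (@ex_derive_continuous R_AbsRing R_NormedModule). eexists. apply HH_deriv. Qed.

Lemma iter_inv q a b : RInt h (Nat.iter q F a) (Nat.iter q F b) = RInt h a b.
Proof.
  induction q as [|q IH]; simpl. reflexivity.
  destruct Hh as [_ [_ [_ [_ Hi]]]]. rewrite Hi. apply IH.
Qed.

Lemma iter_ex_derive q x : ex_derive (Nat.iter q F) x.
Proof.
  revert x. induction q as [|q IH]; intro x.
  - simpl. apply (ex_derive_ext (fun y => y)). reflexivity. apply ex_derive_id.
  - apply (ex_derive_ext (fun y => F (Nat.iter q F y))). reflexivity.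
    apply ex_derive_comp. destruct HF as [_ [H _]]. apply H. apply IH.
Qed.

Lemma iter_deriv_ident q x : h (Nat.iter q F x) * Derive (Nat.iter q F) x = h x.
Proof.
  assert (D1 : is_derive (fun y => HH (Nat.iter q F y) - HH y) x
                 (Derive (Nat.iter q F) x * h (Nat.iter q F x) - h x)).
  { apply (@is_derive_minus R_AbsRing R_NormedModule (fun y => HH (Nat.iter q F y)) HH x).
    apply (@is_derive_comp R_AbsRing R_NormedModule HH (Nat.iter q F)). apply HH_deriv.
    apply Derive_correct. apply iter_ex_derive. apply HH_deriv. }
  assert (D2 : is_derive (fun y => HH (Nat.iter q F y) - HH y) x 0).
  { apply (@is_derive_ext R_AbsRing R_NormedModule (fun _ => HH (Nat.iter q F 0))).
    2: apply (@is_derive_const R_AbsRing R_NormedModule).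
    intro y.
    pose proof (HH_diff (Nat.iter q F 0) (Nat.iter q F y)). rewrite iter_inv in H.
    pose proof (HH_diff 0 y). rewrite HH_0 in H0. lra. }
  pose proof (is_derive_unique _ _ _ D1). pose proof (is_derive_unique _ _ _ D2).
  rewrite H in H0. lra.
Qed.

End Analysis.

Lemma iter_swap (f : R -> R) n x : Nat.iter (S n) f x = Nat.iter n f (f x).
Proof. induction n as [|n IH]; simpl; auto. simpl in IH. rewrite IH. reflexivity. Qed.

Lemma inv_n_lim : is_lim_seq (fun n => / INR n) 0.
Proof.
  replace (Finite 0) with (Rbar_inv p_infty) by reflexivity.
  apply is_lim_seq_inv. apply is_lim_seq_INR. discriminate.
Qed.

Section Rot.
Variables (F h : R -> R) (rho : R).
Hypothesis HF : C1_circle_diffeo_lift F.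
Hypothesis Hh : invariant_density F h.
Hypothesis Hrot : rotation_number F rho.

Lemma HH_iter_gen q x : HH h (Nat.iter q F x) = HH h x + HH h (Nat.iter q F 0).
Proof.
  pose proof (HH_diff F h Hh (Nat.iter q F 0) (Nat.iter q F x)).
  rewrite (iter_inv F h Hh) in H. pose proof (HH_diff F h Hh 0 x). rewrite (HH_0 h) in H0. lra.
Qed.

Lemma HH_iter0 N : HH h (Nat.iter N F 0) = INR N * HH h (F 0).
Proof.
  induction N as [|N IH].
  - simpl. rewrite (HH_0 h). ring.
  - rewrite iter_swap, HH_iter_gen, IH, S_INR. ring.
Qed.

Lemma HH_near z : Rabs (HH h z - z) <= 1.
Proof.
  destruct (h_bounds F h Hh) as [mh [Mh [Hm Hb]]].
  destruct (frac_decomp z) as [k [y [Hy E]]]. rewrite E, (HH_Z F h Hh).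
  replace (HH h y + IZR k - (y + IZR k)) with (HH h y - y) by ring.
  pose proof (RInt_bounds F h Hh mh Mh 0 y Hb (proj1 Hy)).
  pose proof (RInt_bounds F h Hh mh Mh y 1 Hb (Rlt_le _ _ (proj2 Hy))).
  pose proof (chas F h Hh 0 y 1). destruct Hh as [_ [_ [_ [Hone _]]]]. rewrite Hone in H1.
  unfold HH. apply Rabs_le. nra.
Qed.

Lemma HH_F0 : HH h (F 0) = rho.
Proof.
  set (c := HH h (F 0)).
  assert (L : is_lim_seq (fun n => Nat.iter n F 0 / INR n) c).
  { apply (is_lim_seq_le_le_loc (fun n => c - / INR n) _ (fun n => c + / INR n)).
    - exists 1%nat. intros n Hn.
      assert (0 < INR n) by (apply lt_0_INR; lia).
      pose proof (HH_near (Nat.iter n F 0)). rewrite HH_iter0 in H0. fold c in H0.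
      assert (H1 : -1 <= INR n * c - Nat.iter n F 0 <= 1).
      { pose proof (Rle_abs (INR n * c - Nat.iter n F 0)).
        pose proof (Rle_abs (- (INR n * c - Nat.iter n F 0))). rewrite Rabs_Ropp in H2. lra. }
      split.
      + apply (Rmult_le_reg_r (INR n)); auto. unfold Rdiv. rewrite Rmult_assoc, Rinv_l by lra.
        rewrite Rmult_minus_distr_r, Rinv_l by lra. lra.
      + apply (Rmult_le_reg_r (INR n)); auto. unfold Rdiv. rewrite Rmult_assoc, Rinv_l by lra.
        rewrite Rmult_plus_distr_r, Rinv_l by lra. lra.
    - replace (Finite c) with (Rbar_minus c 0) by (simpl; f_equal; ring).
      apply is_lim_seq_minus'. apply is_lim_seq_const. apply inv_n_lim.
    - replace (Finite c) with (Rbar_plus c 0) by (simpl; f_equal; ring).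
      apply is_lim_seq_plus'. apply is_lim_seq_const. apply inv_n_lim. }
  apply is_lim_seq_unique in L. apply is_lim_seq_unique in Hrot. rewrite Hrot in L.
  injection L. auto.
Qed.

Lemma HH_iter q x : HH h (Nat.iter q F x) = HH h x + INR q * rho.
Proof. rewrite HH_iter_gen, HH_iter0, HH_F0. reflexivity. Qed.

End Rot.

Section Step.
Variables (F h : R -> R) (rho s C1 mh Mh : R).
Hypothesis HF : C1_circle_diffeo_lift F.
Hypothesis Hh : invariant_density F h.
Hypothesis Hrot : rotation_number F rho.
Hypothesis Hr : 0 < rho < 1.
Hypothesis Hirr : irrational rho.
Hypothesis Hm : 0 < mh.
Hypothesis Hb : forall x, mh <= h x <= Mh.
Hypothesis HC1 : 0 <= C1.
Hypothesis Hd1 : forall n x, Rabs (Derive (Nat.iter (cf_q rho n) F) x - 1) <= C1 * Rpower (cf_Delta rho n) s.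

Lemma HH_mono a b : a <= b -> mh * (b - a) <= HH h b - HH h a <= Mh * (b - a).
Proof. intro H. rewrite (HH_diff F h Hh). apply (RInt_bounds F h Hh); auto. Qed.

Lemma HH_strict a b : a < b -> HH h a < HH h b.
Proof. intro H. pose proof (HH_mono a b (Rlt_le _ _ H)). nra. Qed.

Lemma HH_inj a b : HH h a = HH h b -> a = b.
Proof.
  intro E. destruct (Rtotal_order a b) as [H|[H|H]]; auto.
  - apply HH_strict in H. lra.
  - apply HH_strict in H. lra.
Qed.

Lemma HH_surj v : exists z, HH h z = v.
Proof.
  set (a := - (Rabs v / mh) - 1). set (b := Rabs v / mh + 1).
  assert (Hv : 0 <= Rabs v / mh) by (apply Rmult_le_pos; [apply Rabs_pos|left; apply Rinv_0_lt_compat; auto]).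
  assert (Ea : mh * (Rabs v / mh) = Rabs v) by (field; lra).
  pose proof (HH_mono a 0 ltac:(unfold a; lra)). pose proof (HH_mono 0 b ltac:(unfold b; lra)).
  rewrite (HH_0 h) in H, H0.
  pose proof (Rle_abs v). pose proof (Rle_abs (- v)). rewrite Rabs_Ropp in H2.
  destruct (IVT_gen_consistent (HH h) a b v (HH_cont F h Hh)) as [z [_ Hz]].
  - rewrite Rmin_left, Rmax_right; unfold a, b in *; try nra.
  - exists z; auto.
Qed.

Lemma IZR_negnat p : IZR (- Z.of_nat p) = - INR p.
Proof. rewrite opp_IZR, INR_IZR_INZ. reflexivity. Qed.

Lemma HH_subnat u p : HH h (u - INR p) = HH h u - INR p.
Proof. unfold Rminus. rewrite <- IZR_negnat, (HH_Z F h Hh). reflexivity. Qed.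

Lemma h_subnat u p : h (u - INR p) = h u.
Proof. unfold Rminus. rewrite <- IZR_negnat, (h_per F h Hh). reflexivity. Qed.

Definition A := Mh * C1.

Lemma step n x : exists y, HH h y = HH h x + cf_Delta rho n /\
  Rabs (h y - h x) <= A * Rpower (cf_Delta rho n) s.
Proof.
  set (q := cf_q rho n). set (p := cf_p rho n).
  assert (Hit : forall u, HH h (Nat.iter q F u - INR p) = HH h u + (INR q * rho - INR p)).
  { intro u. rewrite HH_subnat, (HH_iter F h rho Hh Hrot). ring. }
  assert (Hder : forall u, Rabs (h (Nat.iter q F u) - h u) <= A * Rpower (cf_Delta rho n) s).
  { intro u. rewrite <- (iter_deriv_ident F h HF Hh q u).
    replace (h (Nat.iter q F u) - h (Nat.iter q F u) * Derive (Nat.iter q F) u)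
      with (h (Nat.iter q F u) * - (Derive (Nat.iter q F) u - 1)) by ring.
    rewrite Rabs_mult, Rabs_Ropp. unfold A. rewrite Rmult_assoc.
    pose proof (Hb (Nat.iter q F u)). rewrite Rabs_right by lra.
    apply Rmult_le_compat; try lra. apply Rabs_pos. apply Hd1. }
  assert (HD : cf_Delta rho n = Rabs (INR q * rho - INR p)) by reflexivity.
  destruct (Rcase_abs (INR q * rho - INR p)) as [Hneg|Hpos].
  - rewrite Rabs_left in HD by auto.
    destruct (HH_surj (HH h x + cf_Delta rho n)) as [z Hz].
    exists z. split; auto.
    assert (Ew : Nat.iter q F z - INR p = x).
    { apply HH_inj. rewrite Hit, Hz, HD. ring. }
    rewrite <- Ew, h_subnat. rewrite <- Rabs_Ropp.
    replace (- (h z - h (Nat.iter q F z))) with (h (Nat.iter q F z) - h z) by ring. apply Hder.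
  - rewrite Rabs_right in HD by auto.
    exists (Nat.iter q F x - INR p). split.
    + rewrite Hit, HD. ring.
    + rewrite h_subnat. apply Hder.
Qed.

Lemma multistep n (b : nat) x : exists y, HH h y = HH h x + INR b * cf_Delta rho n /\
  Rabs (h y - h x) <= INR b * (A * Rpower (cf_Delta rho n) s).
Proof.
  revert x. induction b as [|b IH]; intro x.
  - exists x. simpl. split; [ring|]. rewrite Rminus_diag, Rabs_R0. lra.
  - destruct (IH x) as [y1 [E1 B1]]. destruct (step n y1) as [y [E2 B2]].
    exists y. rewrite S_INR. split. rewrite E2, E1. ring.
    replace (h y - h x) with ((h y - h y1) + (h y1 - h x)) by ring.
    eapply Rle_trans. apply Rabs_triang. lra.
Qed.


Lemma A_nonneg : 0 <= A.
Proof. unfold A. pose proof (Hb 0). apply Rmult_le_pos; lra. Qed.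

Lemma Rp_split d : 0 < d -> Rpower d s = d * Rpower d (s - 1).
Proof. intro H. rewrite <- (Rp_1 d) at 2 by auto. rewrite Rp_mul by auto. f_equal. ring. Qed.

Lemma level m x r : 0 <= r -> exists y r', (0 <= r' < cf_Delta rho m) /\ HH h y = HH h x + r - r' /\ Rabs (h y - h x) <= A * r * Rpower (cf_Delta rho m) (s - 1).
Proof.
  intro Hr0. pose proof (Delta_pos rho Hr Hirr m) as HDm. set (D := cf_Delta rho m) in *.
  set (z := Int_part (r / D)).
  assert (Hz0 : (0 <= z)%Z).
  { destruct (base_Int_part (r / D)) as [_ B]. fold z in B.
    assert (0 <= r / D) by (apply Rmult_le_pos; [lra|left; apply Rinv_0_lt_compat; auto]).
    assert (-1 < IZR z) by lra. apply lt_IZR in H0. lia. }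
  set (b := Z.to_nat z).
  assert (Eb : INR b = IZR z) by (unfold b; rewrite INR_IZR_INZ, Z2Nat.id; auto).
  destruct (base_Int_part (r / D)) as [B1 B2]. fold z in B1, B2. rewrite <- Eb in B1, B2.
  assert (Hb1 : INR b * D <= r).
  { apply (Rmult_le_compat_r D) in B1; [|lra]. unfold Rdiv in B1. rewrite Rmult_assoc, Rinv_l in B1 by lra. lra. }
  assert (Hb2 : r < INR b * D + D).
  { assert (r / D < INR b + 1) by lra. apply (Rmult_lt_compat_r D) in H; auto.
    unfold Rdiv in H. rewrite Rmult_assoc, Rinv_l in H by lra. lra. }
  destruct (multistep m b x) as [y [E1 E2]].
  exists y, (r - INR b * D). split; [lra|]. split. fold D in E1. rewrite E1. ring.
  eapply Rle_trans. apply E2. fold D. rewrite Rp_split by auto.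
  pose proof A_nonneg. assert (0 < Rpower D (s - 1)) by apply Rp_pos.
  replace (INR b * (A * (D * Rpower D (s - 1)))) with (A * (INR b * D) * Rpower D (s - 1)) by ring.
  apply Rmult_le_compat_r; [lra|]. apply Rmult_le_compat_l; lra.
Qed.

Fixpoint tl (m M : nat) : R :=
  match M with
  | O => 0
  | S M' => cf_Delta rho m * Rpower (cf_Delta rho (S m)) (s - 1) + tl (S m) M'
  end.

Lemma greedy M : forall m x r, 0 <= r -> exists y,
  (HH h x + r - cf_Delta rho (m + M) < HH h y <= HH h x + r) /\ Rabs (h y - h x) <= A * r * Rpower (cf_Delta rho m) (s - 1) + A * tl m M.
Proof.
  induction M as [|M IH]; intros m x r Hr0.
  - destruct (level m x r Hr0) as [y [r' [Hr' [E B]]]]. exists y. rewrite Nat.add_0_r. simpl tl.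
    split. lra. lra.
  - destruct (level m x r Hr0) as [y1 [r1 [Hr1 [E1 B1]]]].
    destruct (IH (S m) y1 r1 (proj1 Hr1)) as [y [[E2 E3] B2]].
    exists y. replace (m + S M)%nat with (S m + M)%nat by lia. split. lra.
    simpl tl.
    replace (h y - h x) with ((h y - h y1) + (h y1 - h x)) by ring.
    eapply Rle_trans. apply Rabs_triang.
    pose proof A_nonneg. assert (0 < Rpower (cf_Delta rho (S m)) (s - 1)) by apply Rp_pos.
    assert (A * r1 * Rpower (cf_Delta rho (S m)) (s - 1) <= A * cf_Delta rho m * Rpower (cf_Delta rho (S m)) (s - 1)).
    { apply Rmult_le_compat_r; [lra|]. apply Rmult_le_compat_l; lra. }
    nra.
Qed.


Variables (delta sigma c : R).
Hypothesis Hd : 0 <= delta.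
Hypothesis Hsig : delta < sigma < 1 + delta.
Hypothesis Hs : s = sigma / (1 + delta).
Hypothesis Hc : 0 < c.
Hypothesis Hdio : forall n, c * Rpower (cf_Delta_prev rho n) (1 + delta) <= cf_Delta rho n.

Let al := sigma - delta.

Lemma s_lt1 : s - 1 <= 0.
Proof.
  rewrite Hs. assert (sigma / (1 + delta) < 1).
  { apply (Rmult_lt_reg_r (1 + delta)); [lra|]. unfold Rdiv. rewrite Rmult_assoc, Rinv_l by lra. lra. }
  lra.
Qed.

Lemma exp_id : 1 + (1 + delta) * (s - 1) = al.
Proof. unfold al. rewrite Hs. field. lra. Qed.

Let c1 := Rpower c (s - 1).

Lemma next_lower n : Rpower (cf_Delta rho (S n)) (s - 1) <= c1 * Rpower (cf_Delta rho n) ((1 + delta) * (s - 1)).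
Proof.
  pose proof (Hdio (S n)) as H. rewrite (Deltap_S rho Hr Hirr) in H.
  pose proof (Delta_pos rho Hr Hirr n).
  eapply Rle_trans. apply (Rp_base_le_neg _ _ _ (conj (Rmult_lt_0_compat _ _ Hc (Rp_pos _ _)) H) s_lt1).
  rewrite Rp_multbase by (auto; apply Rp_pos). rewrite Rp_pow. unfold c1. right. reflexivity.
Qed.

Lemma term_bound j : cf_Delta rho j * Rpower (cf_Delta rho (S j)) (s - 1) <= c1 * Rpower (cf_Delta rho j) al.
Proof.
  pose proof (Delta_pos rho Hr Hirr j).
  eapply Rle_trans. apply Rmult_le_compat_l. lra. apply next_lower.
  rewrite <- exp_id. rewrite <- Rp_mul by auto. rewrite Rp_1 by auto. right; ring.
Qed.

Definition aa j := Rpower (cf_Delta rho j) al.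

Lemma tl_bound M : forall m, tl m M <= c1 * sum_f_R0 (fun i => aa (m + i)%nat) M.
Proof.
  assert (Hc1 : 0 < c1) by apply Rp_pos.
  induction M as [|M IH]; intro m.
  - simpl. assert (0 < aa (m + 0)%nat) by apply Rp_pos. nra.
  - simpl tl. rewrite decomp_sum by lia. simpl pred. rewrite Nat.add_0_r.
    rewrite (sum_eq (fun i => aa (m + S i)%nat) (fun i => aa (S m + i)%nat)) by (intros; f_equal; lia).
    pose proof (term_bound m). pose proof (IH (S m)). fold (aa m) in H. lra.
Qed.

Let r2 := Rpower (/ 2) al.
Let K2 := 2 / (1 - r2).

Lemma r2_range : 0 <= r2 < 1.
Proof.
  unfold r2. split. left; apply Rp_pos. unfold Rpower. rewrite <- exp_0. apply exp_increasing.
  rewrite ln_Rinv by lra. assert (0 < ln 2). { rewrite <- ln_1. apply ln_increasing; lra. }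
  unfold al. nra.
Qed.

Lemma tl_geom M m : tl m M <= c1 * K2 * aa m.
Proof.
  eapply Rle_trans. apply tl_bound. rewrite Rmult_assoc. apply Rmult_le_compat_l. left; apply Rp_pos.
  apply geom_tail. apply r2_range.
  - intro; left; apply Rp_pos.
  - intro j. unfold aa. apply Rp_base_le. split. apply Delta_pos; auto. left; apply Delta_dec; auto. unfold al; lra.
  - intro j. unfold aa, r2. rewrite Rmult_comm, <- Rp_multbase by (try lra; apply Delta_pos; auto).
    apply Rp_base_le. split. apply Delta_pos; auto. pose proof (Delta_half rho Hr Hirr j). lra. unfold al; lra.
Qed.

Lemma Delta_anti i j : (i <= j)%nat -> cf_Delta rho j <= cf_Delta rho i.
Proof.
  intro H. induction H. lra. pose proof (Delta_dec rho Hr Hirr m). lra.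
Qed.

Lemma Delta_pow k : cf_Delta rho (2 * k) <= (/ 2) ^ k.
Proof.
  induction k as [|k IH]. simpl. rewrite (Delta_0 rho Hr Hirr). lra.
  replace (2 * S k)%nat with (S (S (2 * k))) by lia. pose proof (Delta_half rho Hr Hirr (2 * k)).
  simpl pow. lra.
Qed.

Lemma small_Delta e : 0 < e -> exists k, cf_Delta rho (2 * k) < e.
Proof.
  intro He. destruct (pow_lt_1_zero (/ 2) ltac:(rewrite Rabs_right; lra) e He) as [N HN].
  exists N. specialize (HN N (le_n N)). rewrite Rabs_right in HN.
  pose proof (Delta_pow N). lra. left. apply pow_lt. lra.
Qed.

Lemma find_n d : 0 < d < cf_Delta rho 0 -> exists n, cf_Delta rho (S n) <= d < cf_Delta rho n.
Proof.
  intro H. destruct (small_Delta d (proj1 H)) as [k Hk].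
  assert (forall N, cf_Delta rho N <= d -> exists n, cf_Delta rho (S n) <= d < cf_Delta rho n).
  { induction N as [|N IH]; intro HN. lra.
    destruct (Rle_lt_dec (cf_Delta rho N) d) as [H1|H1]. apply IH; auto. exists N; lra. }
  apply (H0 (2 * k)%nat). lra.
Qed.

Definition BB := Rmax (A * c1 * (1 + K2)) (Mh / Rpower rho al).

Lemma K2_pos : 0 < K2.
Proof. unfold K2. pose proof r2_range. apply Rmult_lt_0_compat; [lra|apply Rinv_0_lt_compat; lra]. Qed.

Lemma h_close z : forall e, 0 < e -> exists eta, 0 < eta /\ forall w, Rabs (w - z) < eta -> Rabs (h w - h z) < e.
Proof.
  intros e He. pose proof (h_cont F h Hh z) as Hc'. apply continuity_pt_filterlim in Hc'.
  destruct (Hc' e He) as [eta [Heta Hw]]. exists eta. split; auto. intros w Hwz.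
  destruct (Req_dec z w) as [E|E]. subst. rewrite Rminus_diag, Rabs_R0. auto.
  apply (Hw w). split; [split; [constructor|auto] | apply Hwz].
Qed.

Lemma holder_main x y : x < y -> Rabs (h y - h x) <= BB * Rpower (HH h y - HH h x) al.
Proof.
  intro Hxy. pose proof (HH_strict x y Hxy) as Hd0. set (d := HH h y - HH h x).
  assert (Hdp : 0 < d) by (unfold d; lra).
  pose proof (Hb x) as Hbx. pose proof (Hb y) as Hby.
  assert (Hal : 0 < al) by (unfold al; lra).
  destruct (Rlt_le_dec d (cf_Delta rho 0)) as [Hsm|Hbig].
  2:{ rewrite (Delta_0 rho Hr Hirr) in Hbig.
      apply Rle_trans with (Mh / Rpower rho al * Rpower d al).
      - assert (Rpower rho al <= Rpower d al) by (apply Rp_base_le; lra).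
        pose proof (Rp_pos rho al).
        apply Rle_trans with (Mh / Rpower rho al * Rpower rho al).
        + unfold Rdiv. rewrite Rmult_assoc, Rinv_l by lra. rewrite Rmult_1_r.
          apply Rabs_le. lra.
        + apply Rmult_le_compat_l; auto. unfold Rdiv. apply Rmult_le_pos; [lra|left; apply Rinv_0_lt_compat; auto].
      - apply Rmult_le_compat_r. left; apply Rp_pos. apply Rmax_r. }
  destruct (find_n d (conj Hdp Hsm)) as [n [Hn1 Hn2]].
  set (m := S n). change (cf_Delta rho (S n)) with (cf_Delta rho m) in Hn1.
  pose proof (Delta_pos rho Hr Hirr n). pose proof (Delta_pos rho Hr Hirr m).
  pose proof A_nonneg as HA. assert (Hc1 : 0 < c1) by apply Rp_pos. pose proof K2_pos.
  assert (B1 : A * d * Rpower (cf_Delta rho m) (s - 1) <= A * c1 * Rpower d al).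
  { assert (Rpower (cf_Delta rho m) (s - 1) <= c1 * Rpower d ((1 + delta) * (s - 1))).
    { eapply Rle_trans. apply next_lower. apply Rmult_le_compat_l. lra.
      apply Rp_base_le_neg. lra. pose proof s_lt1. nra. }
    rewrite <- exp_id, <- Rp_mul by auto. rewrite Rp_1 by auto.
    replace (A * c1 * (d * Rpower d ((1 + delta) * (s - 1)))) with (A * d * (c1 * Rpower d ((1 + delta) * (s - 1)))) by ring.
    apply Rmult_le_compat_l; auto. apply Rmult_le_pos; lra. }
  assert (B2 : A * tl m 0 <= A * c1 * K2 * Rpower d al) by (simpl; assert (0 <= A * c1 * K2 * Rpower d al) by (pose proof (Rp_pos d al); apply Rmult_le_pos; [apply Rmult_le_pos; [apply Rmult_le_pos|]|]; lra); lra).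
  assert (B3 : forall M, A * d * Rpower (cf_Delta rho m) (s - 1) + A * tl m M <= A * c1 * (1 + K2) * Rpower d al).
  { intro M. assert (A * tl m M <= A * (c1 * K2 * aa m)) by (apply Rmult_le_compat_l; auto; apply tl_geom).
    assert (aa m <= Rpower d al) by (unfold aa; apply Rp_base_le; lra).
    assert (A * (c1 * K2 * aa m) <= A * (c1 * K2 * Rpower d al)).
    { apply Rmult_le_compat_l; auto. apply Rmult_le_compat_l; auto. apply Rmult_le_pos; lra. }
    nra. }
  assert (B4 : A * c1 * (1 + K2) * Rpower d al <= BB * Rpower d al).
  { apply Rmult_le_compat_r. left; apply Rp_pos. apply Rmax_l. }
  apply Rle_trans with (A * c1 * (1 + K2) * Rpower d al); auto.
  apply le_epsilon. intros e He.
  destruct (h_close y e He) as [eta [Heta Hcl]].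
  destruct (small_Delta (mh * eta) ltac:(nra)) as [k Hk].
  destruct (greedy (2 * k) m x d (Rlt_le _ _ Hdp)) as [z [[Z1 Z2] Z3]].
  assert (Hmono : cf_Delta rho (m + 2 * k) <= cf_Delta rho (2 * k)) by (apply Delta_anti; lia).
  unfold d in Z1, Z2.
  assert (Hzy : z <= y).
  { destruct (Rle_lt_dec z y) as [L|L]; auto. apply HH_strict in L. lra. }
  pose proof (HH_mono z y Hzy).
  assert (Rabs (h z - h y) < e).
  { apply Hcl. rewrite Rabs_left1 by lra. nra. }
  specialize (B3 (2 * k)%nat).
  replace (h y - h x) with ((h z - h x) - (h z - h y)) by ring.
  eapply Rle_trans. apply Rabs_triang. rewrite Rabs_Ropp. lra.
Qed.

Lemma holder_final : exists C, forall u v, Rabs (h u - h v) <= C * Rpower (Rabs (u - v)) al.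
Proof.
  assert (HB : 0 <= BB).
  { unfold BB. eapply Rle_trans; [|apply Rmax_r]. pose proof (Hb 0). pose proof (Rp_pos rho al).
    unfold Rdiv. apply Rmult_le_pos; [lra|left; apply Rinv_0_lt_compat; auto]. }
  assert (HMh : 0 < Mh) by (pose proof (Hb 0); lra).
  assert (Hal : 0 <= al) by (unfold al; lra).
  assert (key : forall u v, u < v -> Rabs (h v - h u) <= BB * Rpower Mh al * Rpower (v - u) al).
  { intros u v Huv. eapply Rle_trans. apply holder_main; auto.
    pose proof (HH_mono u v (Rlt_le _ _ Huv)). pose proof (HH_strict u v Huv).
    rewrite Rmult_assoc, <- Rp_multbase by lra. apply Rmult_le_compat_l; auto.
    apply Rp_base_le; lra. }
  exists (BB * Rpower Mh al). intros u v.
  destruct (Rtotal_order u v) as [H|[H|H]].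
  - rewrite <- Rabs_Ropp. replace (- (h u - h v)) with (h v - h u) by ring.
    rewrite (Rabs_left (u - v)) by lra. replace (- (u - v)) with (v - u) by ring. apply key; auto.
  - subst. rewrite Rminus_diag, Rabs_R0. apply Rmult_le_pos. apply Rmult_le_pos; auto. left; apply Rp_pos.
    left; apply Rp_pos.
  - rewrite (Rabs_right (u - v)) by lra. apply key; auto.
Qed.

End Step.

Theorem proposition4 (delta sigma rho : R) (F h : R -> R) :
  0 <= delta ->
  C1_circle_diffeo_lift F ->
  0 < rho < 1 ->
  rotation_number F rho ->
  D_delta delta rho ->
  invariant_density F h ->
  0 <= sigma < 1 + delta ->
  (exists C : R, forall (n : nat) (xi : R),
      Rabs (Derive (Nat.iter (cf_q rho n) F) xi - 1) <= C * E_ns rho n sigma) ->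
  (exists C' : R, forall (n : nat) (xi : R),
      Rabs (Derive (Nat.iter (cf_q rho n) F) xi - 1)
        <= C' * Rpower (cf_Delta rho n) (sigma / (1 + delta)))
  /\ C_alpha (Rmax 0 (sigma - delta)) h.
Proof.
  intros Hd HF Hr Hrot HD Hh Hs [C HC].
  assert (Hirr : irrational rho) by apply HD.
  destruct (part1 delta sigma rho Hr Hirr Hd HD Hs) as [K [HK HE]].
  set (C1 := Rmax C 0 * K).
  assert (HC1 : 0 <= C1) by (apply Rmult_le_pos; auto; apply Rmax_r).
  assert (P1 : forall n xi, Rabs (Derive (Nat.iter (cf_q rho n) F) xi - 1)
                 <= C1 * Rpower (cf_Delta rho n) (sigma / (1 + delta))).
  { intros n xi. eapply Rle_trans. apply HC.
    assert (HEn : 0 <= E_ns rho n sigma).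
    { unfold E_ns. apply cond_pos_sum. intro k. apply Rmult_le_pos; [|left; apply Rp_pos].
      unfold Rdiv. apply Rmult_le_pos; [left; apply Delta_pos; auto|left; apply Rinv_0_lt_compat; apply Delta_pos; auto]. }
    apply Rle_trans with (Rmax C 0 * E_ns rho n sigma).
    { apply Rmult_le_compat_r; auto. apply Rmax_l. }
    unfold C1. rewrite Rmult_assoc. apply Rmult_le_compat_l. apply Rmax_r. apply HE. }
  split. exists C1. exact P1.
  split. { intro x. apply (h_cont F h Hh). }
  intro Hpos.
  assert (Hsd : delta < sigma).
  { destruct (Rle_dec (sigma - delta) 0). rewrite Rmax_left in Hpos by lra. lra. lra. }
  rewrite Rmax_right by lra.
  destruct (h_bounds F h Hh) as [mh [Mh [Hm Hb]]].
  destruct (Dio rho Hr Hirr delta Hd HD) as [c [Hc Hdio]].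
  eapply (holder_final F h rho (sigma / (1 + delta)) C1 mh Mh); eauto. lra.
Qed.
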